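(* Let $q$ be a prime power and let $n,k,\delta,\alpha$ be positive integers with $k\le n$, $\alpha\ge 2$ and $\delta\le(\alpha-1)k$. Put $h=\left\lfloor k+1-\frac{\delta}{\alpha-1}\right\rfloor$. Then $$B_q(n,k,\delta;\alpha)\le(\alpha-1)\frac{\left[{n\atop h}\right]_q}{\left[{k\atop h}\right]_q}.$$
   Context: For a prime power $q$, $\mathcal{G}_q(n,k)$ denotes the set of all $k$-dimensional subspaces of $\mathbb{F}_q^n$, and the Gaussian binomial coefficient is $\left[{n\atop k}\right]_q=\prod_{i=0}^{k-1}\frac{q^n-q^i}{q^k-q^i}=|\mathcal{G}_q(n,k)|$. An $\alpha$-$(n,k,\delta)_q^c$ covering Grassmannian code is a subset $\mathcal{C}\subseteq\mathcal{G}_q(n,k)$ (no repeated codewords) such that every set of $\alpha$ distinct codewords of $\mathcal{C}$ spans a subspace of $\mathbb{F}_q^n$ of dimension at least $k+\delta$. $B_q(n,k,\delta;\alpha)$ denotes the maximum size of an $\alpha$-$(n,k,\delta)_q^c$ code. *)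

(* Defs.v *)
From HB Require Import structures.
From mathcomp Require Import all_boot all_order all_algebra.
Unset Printing Implicit Defensive.
Import Order.TTheory GRing.Theory Num.Theory.
Local Open Scope ring_scope.

Definition gauss_binom (q n k : nat) : rat :=
  \prod_(i < k) (((q ^ n)%:R - (q ^ i)%:R) / ((q ^ k)%:R - (q ^ i)%:R)).

(* An alpha-(n,k,delta)_q^c covering Grassmannian code over the finite field F
   (q = #|F|), given as a duplicate-free list C of subspaces of F^n = 'rV[F]_n:
   every codeword has dimension k, and every alpha distinct codewords span a
   subspace of dimension at least k + delta. *)
Definition covering_code (F : finFieldType) (n k delta alpha : nat)
    (C : seq {vspace 'rV[F]_n}) : Prop :=
  uniq C /\
  (forall V, V \in C -> \dim V = k) /\
  (forall S : seq {vspace 'rV[F]_n}, uniq S -> size S = alpha ->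
     {subset S <= C} -> (k + delta <= \dim (\sum_(V <- S) V)%VS)%N).

Definition h_param (k delta alpha : nat) : nat :=
  `|Num.floor ((k%:R + 1 - delta%:R / (alpha%:R - 1)) : rat)|%N.

(* Main.v *)
Require Import Defs.
From HB Require Import structures.
From mathcomp Require Import all_boot all_order all_algebra.
From mathcomp Require Import zify ring lra.
Import Order.TTheory GRing.Theory Num.Theory.
Import VectorInternalTheory.

Section Count.
Variable F : finFieldType.
Local Notation q := #|F|.

Lemma card_subrow n m (A : 'M[F]_(m, n)) :
  #|[set u : 'rV[F]_n | (u <= A)%MS]| = (q ^ \rank A)%N.
Proof.
rewrite -[\rank A]mul1n -card_mx.
have injA: injective (mulmxr (row_base A)).
  have /row_freeP[A' A'K] := row_base_free A.
  by move=> ?; apply: can_inj (mulmxr A') _ => u; rewrite /= -mulmxA A'K mulmx1.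
rewrite -(card_image (injA _)); apply: eq_card => v.
by rewrite inE -(eq_row_base A) (sameP submxP codomP).
Qed.

Definition frm n m r (U : 'M[F]_(r, n)) :=
  [set A : 'M[F]_(m, n) | (\rank A == m) && (A <= U)%MS].


Arguments frm {n} m {r} U.

Lemma card_frm n r (U : 'M[F]_(r, n)) m :
  #|frm m U| = (\prod_(i < m) (q ^ \rank U - q ^ i))%N.
Proof.
elim: m => [|m IHm].
  rewrite big_ord0 (@eq_card1 _ (0%R : 'M_(0, n))) // => A.
  by rewrite !inE [A]flatmx0 mxrank0 sub0mx !eqxx.
rewrite big_ord_recr /= -IHm -sum_nat_const /= -sum1_card.
rewrite (partition_big (fun A : 'M_(1 + m, n) => dsubmx A) (mem (frm m U))) /=; last first.
  move=> A; rewrite !inE -{1 2}(vsubmxK A); move: {A}(_ A) (_ A) => B v /andP[Afull sU].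
  have : (v + B <= U)%MS by rewrite addsmxE.
  rewrite addsmx_sub => /andP[_ ->]; rewrite andbT.
  have h1 := mxrank_adds_leqif v B.
  have h2 := rank_leq_row v; have h3 := rank_leq_row B.
  move: h1 => [h1 _]; rewrite addsmxE (eqP Afull) in h1.
  rewrite eqn_leq h3 /=; rewrite -(leq_add2l 1); apply: leq_trans h1 _.
  by rewrite leq_add2r.
apply: eq_bigr => A; rewrite inE => /andP[rAm sAU].
rewrite (reindex (col_mx^~ A)) /=; last first.
  exists usubmx => [v _ | vA]; first by rewrite col_mxKu.
  by case/andP=> _ /eqP <-; rewrite vsubmxK.
transitivity #|[set u : 'rV_n | (u <= U)%MS] :\: [set u : 'rV_n | (u <= A)%MS]|.
  rewrite -sum1_card; apply: eq_bigl => v; rewrite !inE col_mxKd eqxx andbT.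
  rewrite (col_mx_sub v A U) sAU andbT; congr (_ && _).
  rewrite eqn_leq rank_leq_row /= -(leq_add2r (\rank (v :&: A)%MS)).
  have -> : \rank (col_mx v A) = \rank (v + A)%MS by rewrite addsmxE.
  rewrite mxrank_sum_cap (eqnP rAm) addSn addnC ltn_add2r.
  by rewrite (ltn_leqif (mxrank_leqif_sup _)) ?capmxSl // sub_capmx submx_refl.
rewrite cardsD !card_subrow.
have -> : [set u : 'rV_n | (u <= U)%MS] :&: [set u : 'rV_n | (u <= A)%MS] =
          [set u : 'rV_n | (u <= A)%MS].
  by apply/setP => u; rewrite !inE andb_idl // => /submx_trans; apply.
by rewrite card_subrow (eqP rAm).
Qed.
End Count.
Arguments frm {F n} m {r} U.

Lemma dim_sum_bound (F : fieldType) (vT : vectType F) (W : {vspace vT}) k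
   (S : seq {vspace vT}) :
  (forall V, V \in S -> (W <= V)%VS /\ \dim V = k) ->
  (\dim (W + \sum_(V <- S) V)%VS <= \dim W + size S * (k - \dim W))%N.
Proof.
elim: S => [|V S IH] H.
  by rewrite big_nil addv0 /= mul0n addn0.
have [WV dV] := H V (mem_head _ _).
have IH' := IH (fun X hX => H X ltac:(by rewrite inE hX orbT)).
rewrite big_cons addvA (addvC W V) -addvA.
set X := (W + _)%VS in IH' *.
have hc := dimv_sum_cap V X.
have hW : (\dim W <= \dim (V :&: X))%N.
  by apply: dimvS; rewrite subv_cap WV addvSl.
have hWk : (\dim W <= k)%N by rewrite -dV; apply: dimvS.
rewrite /= mulSn.
rewrite dV in hc.
set p := (size S * _)%N in IH' *.
move: IH' hc hW hWk; lia.
Qed.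

Local Open Scope ring_scope.

Lemma h_props k delta alpha : (0 < delta)%N -> (2 <= alpha)%N ->
  (delta <= (alpha - 1) * k)%N ->
  (h_param k delta alpha <= k)%N /\ ((alpha - 1) * (k - h_param k delta alpha) < delta)%N.
Proof.
move=> hd ha hda.
rewrite /h_param.
set a := (alpha - 1)%N.
have a_pos : (0 < a)%N by rewrite /a; lia.
have eA : (alpha%:R - 1 : rat) = a%:R by rewrite /a natrB ?(leq_trans _ ha).
rewrite eA.
set x : rat := (k%:R + 1 - delta%:R / a%:R).
have apos : (0 : rat) < a%:R by rewrite ltr0n.
have ey : delta%:R / a%:R * a%:R = delta%:R :> rat by rewrite divfK // gt_eqF.
set y := delta%:R / a%:R in x ey *.
have x1 : (1 : rat) <= x.
  rewrite /x lerBrDr addrC lerD2r -(ler_pM2r apos) ey.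
  by rewrite -natrM ler_nat mulnC.
have ypos : (0 : rat) < y.
  by rewrite -(ltr_pM2r apos) ey mul0r ltr0n.
have z0 : (0 <= Num.floor x)%R by rewrite floor_ge_int; apply: le_trans x1.
have [h hz] : exists h : nat, Num.floor x = h%:Z.
  by exists `|Num.floor x|%N; rewrite gez0_abs.
rewrite hz /=.
have lo := floor_le x; have hi := floorD1_gt x.
rewrite hz in lo hi.
have hk : (h <= k)%N.
  rewrite -ltnS -(ltr_nat rat); apply: le_lt_trans lo _.
  rewrite /x -natr1; lra.
split => //.
rewrite -(ltr_nat rat) natrM (natrB _ hk).
have hky : (k%:R - h%:R : rat) < y.
  move: hi; rewrite /x intrD /= -[(h%:Z)%:~R]/(h%:R); lra.
rewrite -ey; nra.
Qed.


Theorem mainTheorem1 (F : finFieldType) (n k delta alpha : nat)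
    (hn : (0 < n)%N) (hk : (0 < k)%N) (hd : (0 < delta)%N)
    (hkn : (k <= n)%N) (ha : (2 <= alpha)%N)
    (hda : (delta <= (alpha - 1) * k)%N)
    (C : seq {vspace 'rV[F]_n}) :
  covering_code F n k delta alpha C ->
  (size C)%:R <= (alpha%:R - 1) *
     (gauss_binom #|F| n (h_param k delta alpha) /
      gauss_binom #|F| k (h_param k delta alpha)) :> rat.
Proof.
move=> [uC [dimC cov]].
have [hhk hlt] := @h_props k delta alpha hd ha hda.
set h := h_param k delta alpha in hhk hlt *.
set q := #|F|.
have q1 : (1 < q)%N := card_finNzRing_gt1 F.
pose f := fun i : 'I_(size C) => nth 0%VS C i.
pose V := fun i : 'I_(size C) => vs2mx (f i).
pose Full := frm h (1%:M : 'M[F]_(dim 'rV[F]_n)).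
have sel : forall A, A \in Full ->
    (#|[set i : 'I_(size C) | (A <= V i)%MS]| <= alpha - 1)%N.
  move=> A; rewrite inE => /andP[/eqP rA _].
  set I := [set i : 'I_(size C) | _].
  rewrite leqNgt; apply/negP => hI.
  have haI : (alpha <= #|I|)%N by lia.
  pose s := take alpha (enum I).
  pose S := map f s.
  have uS : uniq S.
    rewrite map_inj_uniq; first by rewrite take_uniq // enum_uniq.
    move=> i j /eqP; rewrite /f nth_uniq ?ltn_ord // => /eqP; apply: val_inj.
  have sS : size S = alpha by rewrite size_map size_takel // -cardE.
  have subS : {subset S <= C}.
    by move=> X /mapP[i _ ->]; apply: mem_nth; apply: ltn_ord.
  have := cov S uS sS subS.
  pose W := (mx2vs A : {vspace 'rV[F]_n}).
  have dW : \dim W = h by rewrite /dimv mx2vsK.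
  have hS : forall X, X \in S -> (W <= X)%VS /\ \dim X = k.
    move=> X /mapP[i his ->]; split; last by apply: dimC; apply: mem_nth; apply: ltn_ord.
    rewrite /subsetv mx2vsK.
    by move: his => /mem_take; rewrite mem_enum inE.
  have := @dim_sum_bound _ _ W k S hS.
  have := dimvS (addvSr W (\sum_(X <- S) X)).
  rewrite dW sS.
  nia.
have cardV : forall i, #|frm h (V i)| = (\prod_(j < h) (q ^ k - q ^ j))%N.
  move=> i; rewrite card_frm.
  have -> : \rank (V i) = k by apply: dimC; apply: mem_nth; apply: ltn_ord.
  by [].
have cardF : #|Full| = (\prod_(j < h) (q ^ n - q ^ j))%N.
  by rewrite card_frm mxrank1 dim_matrix mul1r.
have E1 : forall i, #|frm h (V i)| =
    (\sum_(A in Full) (if (A <= V i)%MS then 1 else 0))%N.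
  move=> i; rewrite -big_mkcondr /= sum1dep_card; apply: eq_card => A.
  by rewrite !inE submx1 andbT.
have E2 : forall A, A \in Full ->
    (\sum_(i < size C) (if (A <= V i)%MS then 1 else 0) <= alpha - 1)%N.
  by move=> A hA; rewrite -big_mkcond /= sum1dep_card; apply: sel.
have main : (size C * \prod_(j < h) (q ^ k - q ^ j) <=
             (alpha - 1) * \prod_(j < h) (q ^ n - q ^ j))%N.
  have -> : (size C * \prod_(j < h) (q ^ k - q ^ j) =
             \sum_(i < size C) #|frm h (V i)|)%N.
    by rewrite (eq_bigr _ (fun i _ => cardV i)) sum_nat_const card_ord.
  rewrite (eq_bigr _ (fun i _ => E1 i)) exchange_big /=.
  rewrite mulnC -cardF -sum_nat_const.
  by apply: leq_sum => A hA; apply: E2.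
have hq0 : (0 < q)%N by lia.
have Dnz : (\prod_(j < h) ((q ^ h)%:R - (q ^ j)%:R) : rat) != 0.
  apply/prodf_neq0 => j _; rewrite subr_eq0 eqr_nat eqn_exp2l //.
  by rewrite eq_sym neq_ltn ltn_ord.
have gbE : forall m, (h <= m)%N -> gauss_binom q m h =
    (\prod_(j < h) (q ^ m - q ^ j))%N%:R / \prod_(j < h) ((q ^ h)%:R - (q ^ j)%:R).
  move=> m hm; rewrite /gauss_binom big_split /= prodfV natr_prod.
  congr (_ * _); apply: eq_bigr => j _; rewrite natrB // leq_exp2l //.
  by apply: leq_trans hm; apply: ltnW.
have Pk0 : (0 < \prod_(j < h) (q ^ k - q ^ j))%N.
  apply: prodn_gt0 => j; rewrite subn_gt0 ltn_exp2l //.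
  by apply: leq_trans hhk.
rewrite (gbE n) ?(leq_trans hhk) // (gbE k) //.
have -> : (alpha%:R - 1 : rat) = (alpha - 1)%:R by rewrite natrB ?(leq_trans _ ha).
set Pn := (\prod_(j < h) (q ^ n - q ^ j))%N.
set Pk := (\prod_(j < h) (q ^ k - q ^ j))%N in Pk0 main *.
set D := \prod_(j < h) _ in Dnz *.
have -> : Pn%:R / D / (Pk%:R / D) = Pn%:R / Pk%:R :> rat.
  by rewrite invf_div mulrA divfK.
rewrite mulrA ler_pdivlMr ?ltr0n // -!natrM ler_nat.
exact: main.
Qed.
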